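(* Let $\mathbb{X}$ be a set, $f:\mathbb{X}\to\mathbb{X}$ a bijection, $h:\mathbb{X}\to\mathbb{R}$ bounded with $\upsilon_h=\sup_{x\in\mathbb{X}}|h(x)|$, $m\ge1$ and $\ell>m$ integers, and $\beta\in(0,1)$. For $x\in\mathbb{X}$ and $k\in\{0,\dots,m-1\}$ let $$\zeta_k(x)=\sum_{t=0}^\infty\binom{k+t}{k}\beta^t(1-\beta)^{k+1}h\big(f^{-(k+t+1)}(x)\big),\qquad \tilde z_k(x)=\sum_{t=0}^{\ell-m}\binom{k+t}{k}\beta^t(1-\beta)^{k+1}h\big(f^{-(k+t+1)}(x)\big),$$ and $\zeta(x)=(\zeta_0(x),\dots,\zeta_{m-1}(x))$, $\tilde z(x)=(\tilde z_0(x),\dots,\tilde z_{m-1}(x))$. Suppose $\tilde\beta=\beta\big(1+\frac{m-1}{\ell-m}\big)<1$, i.e., $\ell>m+\frac{m-1}{\beta^{-1}-1}$. Then for every $x\in\mathbb{X}$, $$\|\tilde z(x)-\zeta(x)\|\le\binom{\ell-1}{m-1}\sqrt m\,\upsilon_h\,\frac{1-\beta}{1-\tilde\beta}\,\tilde\beta\,\beta^{\ell-m}.$$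
   Context: $\|\cdot\|$ is the Euclidean norm on $\mathbb{R}^m$; $f^{-j}$ is the $j$-fold composition of $f^{-1}$. In the paper, $\tilde z(x^{(i)})$ is computed from a backward orbit $x^{(i)},f^{-1}(x^{(i)}),\dots,f^{-\ell}(x^{(i)})$ of a sample point. *)

(* Defs.v *)
From Stdlib Require Import Reals.
From Coquelicot Require Import Coquelicot.
Open Scope R_scope.

Definition binomR (n k : nat) : R := Binomial.C n k.

Definition finv_iter {X : Type} (finv : X -> X) (j : nat) (x : X) : X :=
  Nat.iter j finv x.

Definition zeta_term {X : Type} (finv : X -> X) (h : X -> R) (beta : R)
  (k : nat) (x : X) (t : nat) : R :=
  binomR (k + t) k * beta ^ t * (1 - beta) ^ (k + 1)
  * h (finv_iter finv (k + t + 1) x).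

Definition zeta {X : Type} (finv : X -> X) (h : X -> R) (beta : R)
  (k : nat) (x : X) : R :=
  Series (zeta_term finv h beta k x).

Definition ztilde {X : Type} (finv : X -> X) (h : X -> R) (beta : R)
  (l m k : nat) (x : X) : R :=
  sum_f_R0 (zeta_term finv h beta k x) (l - m).

Definition eucl_norm (m : nat) (u : nat -> R) : R :=
  sqrt (sum_f_R0 (fun k => (u k) ^ 2) (m - 1)).

(* Main.v *)
Require Import Defs.
From Stdlib Require Import Reals Lra Lia.
From Coquelicot Require Import Coquelicot.
Open Scope R_scope.

Lemma binom_fact k t : binomR (k+t) k = INR (Factorial.fact (k+t)) / (INR (Factorial.fact k) * INR (Factorial.fact t)).
Proof. unfold binomR, Binomial.C. replace (k+t-k)%nat with t by lia. reflexivity. Qed.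

Lemma binom_nonneg k t : 0 <= binomR (k+t) k.
Proof. rewrite binom_fact. pose proof (INR_fact_lt_0 (k+t)). pose proof (INR_fact_lt_0 k).
 pose proof (INR_fact_lt_0 t). apply Rlt_le, Rdiv_lt_0_compat; [lra| apply Rmult_lt_0_compat; lra]. Qed.

Lemma t_step k t : binomR (k + S t) k = binomR (k+t) k * (INR (k+t+1) / INR (t+1)).
Proof. rewrite !binom_fact. replace (k + S t)%nat with (S (k+t)) by lia.
 rewrite !fact_simpl, !mult_INR. replace (k+t+1)%nat with (S (k+t)) by lia.
 replace (t+1)%nat with (S t) by lia.
 pose proof (INR_fact_lt_0 (k+t)). pose proof (INR_fact_lt_0 k).
 pose proof (INR_fact_lt_0 t). pose proof (lt_0_INR (S t) ltac:(lia)).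
 pose proof (lt_0_INR (S (k+t)) ltac:(lia)). field. lra. Qed.

Lemma k_step k t : binomR (S k + t) (S k) = binomR (k+t) k * (INR (k+t+1) / INR (k+1)).
Proof. rewrite !binom_fact. replace (S k + t)%nat with (S (k+t)) by lia.
 rewrite !fact_simpl, !mult_INR. replace (k+t+1)%nat with (S (k+t)) by lia.
 replace (k+1)%nat with (S k) by lia.
 pose proof (INR_fact_lt_0 (k+t)). pose proof (INR_fact_lt_0 k).
 pose proof (INR_fact_lt_0 t). pose proof (lt_0_INR (S k) ltac:(lia)).
 pose proof (lt_0_INR (S (k+t)) ltac:(lia)). field. lra. Qed.

Lemma binom_mono d k t : binomR (k+t) k <= binomR (d+k+t) (d+k).
Proof. induction d as [|d IH]. simpl. lra.
 replace (S d + k + t)%nat with (S (d+k) + t)%nat by lia. replace (S d + k)%nat with (S (d+k)) by lia.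
 rewrite (k_step (d+k) t). pose proof (binom_nonneg (d+k) t).
 assert (1 <= INR (d + k + t + 1) / INR (d + k + 1)).
 { pose proof (lt_0_INR (d+k+1) ltac:(lia)). apply (Rmult_le_reg_r (INR (d+k+1))); [lra|].
   unfold Rdiv. rewrite Rmult_assoc, Rinv_l by lra. rewrite Rmult_1_r, Rmult_1_l. apply le_INR; lia. }
 nra. Qed.

Lemma comp_bound {X : Type} (finv : X -> X) (h : X -> R) (vh beta : R) (n m1 k : nat) (x : X)
  (Hvh : forall y, Rabs (h y) <= vh) (Hn : (0 < n)%nat) (Hk : (k <= m1)%nat)
  (Hb0 : 0 < beta) (Hb1 : beta < 1)
  (Htb : beta * (1 + INR m1 / INR n) < 1) :
  Rabs (sum_f_R0 (zeta_term finv h beta k x) n - zeta finv h beta k x)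
  <= binomR (m1 + n) m1 * vh * ((1 - beta) / (1 - beta * (1 + INR m1 / INR n)))
       * (beta * (1 + INR m1 / INR n)) * beta ^ n.
Proof.
  set (tb := beta * (1 + INR m1 / INR n)). assert (Htb1 : tb < 1) by exact Htb.
  set (a := fun t => binomR (k+t) k * beta ^ t).
  assert (Hn' : 0 < INR n) by (apply lt_0_INR; lia).
  assert (Hm1 : 0 <= INR m1) by apply pos_INR.
  assert (Htb0 : beta <= tb).
  { unfold tb. assert (0 <= INR m1 / INR n) by (apply Rdiv_le_0_compat; lra). nra. }
  assert (Hvh0 : 0 <= vh) by (pose proof (Hvh x); pose proof (Rabs_pos (h x)); lra).
  assert (Ha0 : forall t, 0 <= a t).
  { intro t. unfold a. pose proof (binom_nonneg k t). pose proof (pow_le beta t). nra. }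
  assert (Hgeo : forall j, a (n+j)%nat <= a n * tb ^ j).
  { induction j as [|j IH]. rewrite Nat.add_0_r. simpl. lra.
    replace (n + S j)%nat with (S (n+j)) by lia.
    assert (E : a (S (n+j)) = a (n+j)%nat * (INR (k + (n+j) + 1) / INR (n+j+1) * beta)).
    { unfold a. replace (k + S (n+j))%nat with (k + S (n+j))%nat by lia. rewrite t_step. simpl. ring. }
    rewrite E.
    assert (Hr : INR (k + (n + j) + 1) / INR (n + j + 1) <= 1 + INR m1 / INR n).
    { assert (Hp : 0 < INR (n+j+1)) by (apply lt_0_INR; lia).
      replace (INR (k + (n + j) + 1) / INR (n + j + 1)) with (1 + INR k / INR (n+j+1)).
      2:{ rewrite !plus_INR. field. rewrite <- !plus_INR. lra. }
      apply Rplus_le_compat_l. unfold Rdiv. apply Rmult_le_compat.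
      apply pos_INR. left; apply Rinv_0_lt_compat; lra. apply le_INR; lia.
      apply Rinv_le_contravar. lra. apply le_INR; lia. }
    assert (Hr0 : 0 <= INR (k + (n + j) + 1) / INR (n + j + 1)).
    { apply Rdiv_le_0_compat; [apply pos_INR| apply lt_0_INR; lia]. }
    assert (a (n + j)%nat * (INR (k + (n + j) + 1) / INR (n + j + 1) * beta) <= a (n+j)%nat * tb).
    { apply Rmult_le_compat_l. apply Ha0. unfold tb. nra. }
    simpl. pose proof (Ha0 (n+j)%nat). nra. }
  assert (Hterm : forall t, Rabs (zeta_term finv h beta k x t) <= a t * (1-beta)^(k+1) * vh).
  { intro t. unfold zeta_term. fold (a t).
    pose proof (Ha0 t). assert (0 <= (1-beta)^(k+1)) by (apply pow_le; lra).
    rewrite Rabs_mult, (Rabs_mult (a t)), (Rabs_pos_eq (a t)), Rabs_pos_eq by lra.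
    apply Rmult_le_compat_l. nra. apply Hvh. }
  set (K := a n * (1-beta)^(k+1) * vh * tb).
  set (v := fun j => K * tb ^ j).
  assert (HK : 0 <= K).
  { unfold K. pose proof (Ha0 n). assert (0 <= (1-beta)^(k+1)) by (apply pow_le; lra).
    apply Rmult_le_pos; [|lra]. apply Rmult_le_pos; [|lra]. nra. }
  assert (Hv : is_series v (K * / (1 - tb))).
  { apply (is_series_scal_l K (fun j => tb ^ j)). apply is_series_geom. rewrite Rabs_pos_eq; lra. }
  assert (Htail : forall j, Rabs (zeta_term finv h beta k x (S n + j)) <= v j).
  { intro j. eapply Rle_trans. apply Hterm. unfold v, K.
    replace (S n + j)%nat with (n + S j)%nat by lia.
    assert (H1 : a (n + S j)%nat <= a n * (tb * tb ^ j)) by exact (Hgeo (S j)).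
    assert (0 <= (1-beta)^(k+1)) by (apply pow_le; lra).
    replace (a n * (1 - beta) ^ (k + 1) * vh * tb * tb ^ j) with (a n * (tb * tb ^ j) * (1 - beta) ^ (k + 1) * vh) by ring.
    apply Rmult_le_compat_r; [lra|]. apply Rmult_le_compat_r; [lra|]. exact H1. }
  assert (Hex : ex_series (zeta_term finv h beta k x)).
  { apply (ex_series_incr_n _ (S n)). apply (@ex_series_le R_AbsRing R_CompleteNormedModule _ v). exact Htail. eexists; exact Hv. }
  unfold zeta. rewrite (Series_incr_n _ (S n)) by (lia || exact Hex). simpl Init.Nat.pred.
  replace (sum_f_R0 (zeta_term finv h beta k x) n -
     (sum_f_R0 (zeta_term finv h beta k x) n +
      Series (fun k0 : nat => zeta_term finv h beta k x (S n + k0))))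
   with (- Series (fun k0 : nat => zeta_term finv h beta k x (S n + k0))) by ring.
  rewrite Rabs_Ropp.
  assert (Hexa : ex_series (fun j => Rabs (zeta_term finv h beta k x (S n + j)))).
  { apply (@ex_series_le R_AbsRing R_CompleteNormedModule _ v). intro j. unfold norm; simpl. unfold abs; simpl. rewrite Rabs_Rabsolu. apply Htail.
    eexists; exact Hv. }
  eapply Rle_trans. apply Series_Rabs. exact Hexa.
  eapply Rle_trans. apply (Series_le _ v). intro j. split. apply Rabs_pos. apply Htail. eexists; exact Hv.
  rewrite (is_series_unique _ _ Hv).
  assert (Hd : (k + (m1 - k) = m1)%nat) by lia.
  pose proof (binom_mono (m1 - k) k n) as Hbm. rewrite Nat.add_comm in Hd.
  rewrite Hd in Hbm.
  assert (Hpk : forall i, 0 <= (1-beta)^i <= 1).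
  { induction i as [|i IH]; simpl; nra. }
  assert (HQ : 0 <= (1-beta)*vh*tb*beta^n / (1-tb)).
  { apply Rdiv_le_0_compat; [|lra]. pose proof (pow_le beta n ltac:(lra)).
    apply Rmult_le_pos; [|lra]. apply Rmult_le_pos; [|lra]. nra. }
  pose proof (binom_nonneg k n). pose proof (Hpk k).
  unfold K, a.
  replace (binomR (k + n) k * beta ^ n * (1 - beta) ^ (k + 1) * vh * tb * / (1 - tb))
    with ((binomR (k + n) k * (1 - beta) ^ k) * ((1-beta)*vh*tb*beta^n / (1-tb)))
    by (rewrite pow_add; field; lra).
  replace (binomR (m1 + n) m1 * vh * ((1 - beta) / (1 - tb)) * tb * beta ^ n)
    with (binomR (m1 + n) m1 * ((1-beta)*vh*tb*beta^n / (1-tb))) by (field; lra).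
  apply Rmult_le_compat_r. exact HQ. nra.
Qed.

Theorem lemma2 (X : Type) (f finv : X -> X)
  (Hf1 : forall x, f (finv x) = x) (Hf2 : forall x, finv (f x) = x)
  (h : X -> R) (vh : R)
  (Hvh : is_lub (fun r => exists x, r = Rabs (h x)) vh)
  (m l : nat) (Hm : (1 <= m)%nat) (Hlm : (m < l)%nat)
  (beta : R) (Hb0 : 0 < beta) (Hb1 : beta < 1)
  (Htb : beta * (1 + INR (m - 1) / INR (l - m)) < 1) :
  forall x : X,
    eucl_norm m (fun k => ztilde finv h beta l m k x - zeta finv h beta k x)
    <= binomR (l - 1) (m - 1) * sqrt (INR m) * vh
       * ((1 - beta) / (1 - beta * (1 + INR (m - 1) / INR (l - m))))
       * (beta * (1 + INR (m - 1) / INR (l - m)))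
       * beta ^ (l - m).
Proof.
  intro x.
  assert (Hv : forall y, Rabs (h y) <= vh).
  { intro y. apply (proj1 Hvh). exists y. reflexivity. }
  replace (l - 1)%nat with (m - 1 + (l - m))%nat by lia.
  set (B := binomR (m - 1 + (l - m)) (m - 1) * vh
       * ((1 - beta) / (1 - beta * (1 + INR (m - 1) / INR (l - m))))
       * (beta * (1 + INR (m - 1) / INR (l - m))) * beta ^ (l - m)).
  assert (Hc : forall k, (k <= m - 1)%nat ->
     Rabs (ztilde finv h beta l m k x - zeta finv h beta k x) <= B).
  { intros k Hk. unfold ztilde, B. apply comp_bound; auto; lia. }
  assert (HB : 0 <= B) by (eapply Rle_trans; [apply Rabs_pos| apply (Hc 0%nat); lia]).
  replace (binomR (m - 1 + (l - m)) (m - 1) * sqrt (INR m) * vh *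
   ((1 - beta) / (1 - beta * (1 + INR (m - 1) / INR (l - m)))) *
   (beta * (1 + INR (m - 1) / INR (l - m))) * beta ^ (l - m)) with (sqrt (INR m) * B)
   by (unfold B; ring).
  unfold eucl_norm.
  eapply Rle_trans. apply sqrt_le_1_alt.
  apply (sum_Rle _ (fun _ => B ^ 2)). intros k Hk.
  rewrite <- pow2_abs. apply pow_incr. split. apply Rabs_pos. apply Hc; lia.
  rewrite sum_cte. replace (S (m - 1)) with m by lia.
  rewrite sqrt_mult, sqrt_pow2 by (auto using pow2_ge_0, pos_INR). lra.
Qed.
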